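(* Let $S_1,S_2,\ldots,S_k$ be numerical semigroups and let $S = \bigcap_{i=1}^k S_i$. Suppose that $d_i \in S_i \setminus \{0\}$ for $i=1,2,\ldots,k$. Then there exists an $A\in \mathsf{M}_{d_1+d_2+\cdots + d_k}(\mathbb{Q})$ such that $\mathcal{S}(A) = S$. In particular, $\dim_{\mathrm{mat}} S \leq d_1 + d_2 + \cdots + d_k$.
   Context: $\mathbb{N} = \{0,1,2,\ldots\}$. A semigroup means an additive subsemigroup of $\mathbb{N}$ containing $0$; a numerical semigroup is a semigroup with finite complement in $\mathbb{N}$. $\mathsf{M}_d(X)$ denotes the $d\times d$ matrices with entries in $X$. For $A \in \mathsf{M}_d(\mathbb{Q})$, $\mathcal{S}(A) = \{ n \in \mathbb{N} : A^n \in \mathsf{M}_d(\mathbb{Z})\}$. The matricial dimension $\dim_{\mathrm{mat}} S$ of a semigroup $S$ is the smallest $d$ such that $S = \mathcal{S}(A)$ for some $A \in \mathsf{M}_d(\mathbb{Q})$. *)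

(* Defs.v *)
From mathcomp Require Import all_boot all_order all_algebra.
Set Implicit Arguments. Unset Strict Implicit. Unset Printing Implicit Defensive.
Import Order.TTheory GRing.Theory Num.Theory.
Local Open Scope ring_scope.

Definition is_semigroup (S : nat -> Prop) : Prop :=
  S 0%N /\ (forall a b, S a -> S b -> S (a + b)%N).

Definition numerical_semigroup (S : nat -> Prop) : Prop :=
  is_semigroup S /\ exists N : nat, forall n, (N <= n)%N -> S n.

Definition mxpow (m : nat) (A : 'M[rat]_m) (n : nat) : 'M[rat]_m :=
  iter n (mulmx A) 1%:M.

Definition int_mx (m : nat) (A : 'M[rat]_m) : Prop :=
  forall i j, A i j \is a Num.int.

Definition SA (m : nat) (A : 'M[rat]_m) : nat -> Prop :=
  fun n => int_mx (mxpow A n).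

(* Main.v *)
Require Import Defs.
From mathcomp Require Import all_boot all_order all_algebra.
From Stdlib Require Import ClassicalEpsilon.
From mathcomp Require Import zify.
Set Implicit Arguments. Unset Strict Implicit. Unset Printing Implicit Defensive.
Import Order.TTheory GRing.Theory Num.Theory.
Local Open Scope ring_scope.

Lemma pow2z_int (z : int) : (((2:rat) ^ z) \is a Num.int) = (0 <= z).
Proof.
case: z => n.
  by rewrite -exprnP /= lez_nat leq0n rpredX.
rewrite NegzE /= -invr_expz -exprnP.
apply/negbTE/negP => H.
have h1 : (1:rat) < 2 ^+ n.+1 by rewrite exprn_egt1.
have h0 : (0:rat) < 2 ^+ n.+1 by rewrite exprn_gt0.
have hne : (2:rat) ^- n.+1 != 0 by rewrite invr_eq0 gt_eqF.
have hpos : (0:rat) < 2 ^- n.+1 by rewrite invr_gt0.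
have := norm_intr_ge1 H hne.
rewrite ger0_norm ?(ltW hpos) // => hle.
have hlt : (2:rat) ^- n.+1 < 1 by rewrite invf_lt1.
by move: hlt; rewrite ltNge hle.
Qed.
Local Close Scope ring_scope.
Definition Sb (S : nat -> Prop) n : bool :=
  if excluded_middle_informative (S n) then true else false.

Lemma SbP S n : reflect (S n) (Sb S n).
Proof. by rewrite /Sb; case: excluded_middle_informative => h; constructor. Qed.

Lemma q_ex S d : (0 < d)%N -> numerical_semigroup S ->
  forall r, exists m, Sb S (m * d + r).
Proof.
move=> hd [_ [N hN]] r; exists N; apply/SbP/hN.
by apply: leq_trans (leq_addr _ _); rewrite leq_pmulr.
Qed.

Definition qf S d (hd : (0 < d)%N) (hS : numerical_semigroup S) r :=
  ex_minn (q_ex hd hS r).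

Lemma qf_in S d hd hS r : S (@qf S d hd hS r * d + r).
Proof. by rewrite /qf; case: ex_minnP => m /SbP. Qed.

Lemma qf_min S d hd hS r m : S (m * d + r) -> (@qf S d hd hS r <= m)%N.
Proof. by rewrite /qf; case: ex_minnP => m' _ H /SbP /H. Qed.

Lemma S_addd S d (hS : numerical_semigroup S) : S d ->
  forall x k, S x -> S (x + k * d).
Proof.
move=> Sd x k Sx; elim: k => [|k IH]; first by rewrite addn0.
by rewrite mulSn addnCA addnC; apply: hS.1.2.
Qed.

Lemma qf_up S d hd hS r m : S d -> (@qf S d hd hS r <= m)%N -> S (m * d + r).
Proof.
move=> Sd hm; have := S_addd hS Sd (m - qf hd hS r) (qf_in hd hS r).
by rewrite addnAC -mulnDl subnKC.
Qed.

Lemma qf0 S d hd hS : @qf S d hd hS 0 = 0%N.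
Proof. by apply/eqP; rewrite -leqn0; apply: qf_min; rewrite mul0n; exact: hS.1.1. Qed.
Local Open Scope ring_scope.
Definition Emx (q : nat -> nat) d (j n : nat) : int :=
  (((j + n) %/ d)%N + q j)%N%:Z - (q ((j + n) %% d)%N)%:Z.

Definition Amx (q : nat -> nat) d : 'M[rat]_d :=
  \matrix_(i, j) if (i == ((j + 1) %% d)%N :> nat) then (2:rat) ^ Emx q d j 1 else 0.

Lemma mxpow_Amx q d (hd : (0 < d)%N) n (i j : 'I_d) :
  mxpow (Amx q d) n i j =
  if (i == ((j + n) %% d)%N :> nat) then (2:rat) ^ Emx q d j n else 0.
Proof.
elim: n i => [|n IH] i.
  rewrite /mxpow /= mxE addn0 modn_small // /Emx addn0 divn_small // add0n.
  by rewrite modn_small // subrr expr0z; case: (@eqP _ i j) => [->|h]; rewrite ?eqxx //; case: eqP => // /val_inj.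
rewrite /mxpow /= -/(mxpow _ n) mxE.
pose k0 : 'I_d := Ordinal (ltn_pmod (j + n) hd).
rewrite (bigD1 k0) //= big1 ?addr0; last first.
  move=> k hk; rewrite IH ifF ?mulr0 //.
  by apply/negbTE; apply: contra hk => /eqP h; apply/eqP/val_inj.
rewrite IH eqxx mxE /= modnDml -addnA addn1.
case: ifP => _; last by rewrite mul0r.
rewrite -expfzDr // /Emx; congr (_ ^ _).
have -> : ((j + n.+1) %/ d = (j + n) %/ d + ((j + n) %% d + 1) %/ d)%N.
  by rewrite addnS -addn1 {1}(divn_eq (j + n) d) -addnA divnMDl.
have e1 : ((j + n + 1) %% d = (j + n.+1) %% d)%N by rewrite addn1 addnS.
rewrite modnDml e1 !PoszD; lia.
Qed.

Lemma int_Amx q d (hd : (0 < d)%N) n :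
  int_mx (mxpow (Amx q d) n) <-> forall j : 'I_d, 0 <= Emx q d j n.
Proof.
split=> H.
  move=> j; have := H (Ordinal (ltn_pmod (j + n) hd)) j.
  by rewrite mxpow_Amx //= eqxx pow2z_int.
move=> i j; rewrite mxpow_Amx //; case: ifP => _; last exact: rpred0.
by rewrite pow2z_int.
Qed.

Lemma single S d (hd : (0 < d)%N) (hS : numerical_semigroup S) (Sd : S d) :
  exists A : 'M[rat]_d, forall n, SA A n <-> S n.
Proof.
exists (Amx (qf hd hS) d) => n; rewrite /SA int_Amx //; split => H.
  have := H (Ordinal hd); rewrite /Emx /= add0n qf0 addn0 subr_ge0 lez_nat => h.
  rewrite (divn_eq n d); exact: qf_up Sd h.
move=> j; rewrite /Emx subr_ge0 lez_nat; apply: qf_min.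
have := hS.1.2 _ _ (qf_in hd hS j) H.
suff -> : (((j + n) %/ d + qf hd hS j) * d + (j + n) %% d = qf hd hS j * d + j + n)%N by [].
have e := divn_eq (j + n) d; rewrite mulnDl; lia.
Qed.
Lemma mul_mxdiag k (p_ : 'I_k -> nat) (D E : forall i, 'M[rat]_(p_ i)) :
  mxdiag D *m mxdiag E = mxdiag (fun i => D i *m E i).
Proof.
rewrite {2}/mxdiag mul_mxdiag_mxblock /mxdiag; apply/eq_mxblock => i j.
by case: eqVneq => [->|]; rewrite ?conform_mx_id ?mulmx0.
Qed.

Lemma mxpow_mxdiag k (p_ : 'I_k -> nat) (D : forall i, 'M[rat]_(p_ i)) n :
  mxpow (mxdiag D) n = mxdiag (fun i => mxpow (D i) n).
Proof.
elim: n => [|n IH]; first by rewrite /mxpow /= mxdiagZ.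
by rewrite /mxpow /= -!/(mxpow _ n) IH mul_mxdiag.
Qed.

Lemma conform_entry m n m' n' (A : 'M[rat]_(m, n)) (i : 'I_m') (j : 'I_n') :
  (conform_mx 0 A) i j = 0 \/ exists i' j', (conform_mx 0 A) i j = A i' j'.
Proof.
rewrite /conform_mx; case: eqP => e1; last by rewrite mxE; left.
case: eqP => e2; last by rewrite mxE; left.
by right; rewrite castmxE; eexists; eexists.
Qed.

Lemma int_mxdiag k (p_ : 'I_k -> nat) (D : forall i, 'M[rat]_(p_ i)) :
  int_mx (mxdiag D) <-> forall i, int_mx (D i).
Proof.
split.
  move=> H i a b; rewrite -(submxblock_diag D i) /submxblock mxE; exact: H.
move=> H s t; rewrite /mxdiag mxE.
case: eqP => _; last by rewrite mxE rpred0.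
case: (conform_entry (D (tagnat.sig1 s)) (tagnat.sig2 s) (tagnat.sig2 t)) => [->|[i' [j' ->]]].
  exact: rpred0.
exact: H.
Qed.

Theorem theorem2p5 (k : nat) (Ss : 'I_k -> nat -> Prop) (d : 'I_k -> nat) :
  (0 < k)%N ->
  (forall i, numerical_semigroup (Ss i)) ->
  (forall i, Ss i (d i) /\ (0 < d i)%N) ->
  exists A : 'M[rat]_(\sum_(i < k) d i),
    forall n : nat, SA A n <-> (forall i, Ss i n).
Proof.
move=> _ hS hd.
have ex : forall i, exists A : 'M[rat]_(d i), forall n, SA A n <-> Ss i n.
  by move=> i; apply: single (hd i).2 (hS i) (hd i).1.
pose B i := proj1_sig (constructive_indefinite_description _ (ex i)).
have hB i : forall n, SA (B i) n <-> Ss i n.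
  exact: (proj2_sig (constructive_indefinite_description _ (ex i))).
exists (mxdiag B) => n; rewrite /SA mxpow_mxdiag int_mxdiag.
split=> H i; [apply/hB; exact: H | apply/hB; exact: H].
Qed.
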